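(* Let $1<n\leq m$ and let $v\in Z_{n,m}$ with $I_c(v)\subseteq[1,m]$ and $\sum_{i\in I_c(v)}v_i=0$. Then $$d(v,0)\leq\sum_{i=1}^{p_l(v)}i+\sum_{i=1}^{m-p_r(v)}i+\lfloor\tfrac{\gamma}{2}\rfloor\lceil\tfrac{\gamma}{2}\rceil,$$ where $\gamma=|I_c(v)|$.
   Context: Elements of $\mathbb{Z}_n$ are identified with representatives in $\{0,\dots,n-1\}$. $Z_{n,m}$ has vertices $u=(u_0,\dots,u_{m+1})\in\mathbb{Z}_n\times\{-1,0,1\}^m\times\mathbb{Z}_n$ with $\sum u_i\equiv0\pmod n$; $u,v$ adjacent if there is $0\leq i\leq m$ with $u_j=v_j$ for $j\notin\{i,i+1\}$ and either ($u_i=v_i+1$, $u_{i+1}=v_{i+1}-1$) or ($u_i=v_i-1$, $u_{i+1}=v_{i+1}+1$), arithmetic in coordinates $0,m+1$ in $\mathbb{Z}_n$. $d$ is graph distance, $0$ the all-zero vertex. $\operatorname{Piv}(v)$ is the set of $-1\le p\le m+1$ with $n\mid\sum_{i=0}^pv_i$ (empty sum $0$). $p_l(v)=\max\{p\in\operatorname{Piv}(v):p<\frac m2\}$, $p_r(v)=\min\{p\in\operatorname{Piv}(v):p\ge\frac m2\}$, $I_c(v)=\{p_l(v)+1,\dots,p_r(v)\}$. *)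

(* Defs.v *)
From HB Require Import structures.
From mathcomp Require Import all_boot all_order all_algebra.
Unset Printing Implicit Defensive.
Import Order.TTheory GRing.Theory Num.Theory.

(* A vertex of Z_{n,m} is stored as a function
   u : 'I_(m+2) -> int, coordinate k being u_k (k = 0, ..., m+1). *)
Definition V (m : nat) := {ffun 'I_m.+2 -> int}.

Definition zeroV (m : nat) : V m := [ffun => 0%R].

Definition endcoord (m : nat) (k : 'I_m.+2) : bool := (k == ord0) || (k == ord_max).

Definition inZ (n m : nat) (u : V m) : bool :=
  [forall k : 'I_m.+2,
     if endcoord m k then (0 <= u k)%R && (u k < n%:Z)%R
     else u k \in [:: (-1)%R; 0%R; 1%R]]
  && (n%:Z %| (\sum_(k < m.+2) u k)%R)%Z.

Definition coord_eq (n m : nat) (k : 'I_m.+2) (a b : int) : bool :=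
  if endcoord m k then (a == b %[mod n%:Z])%Z else a == b.

Definition adj (n m : nat) (u v : V m) : bool :=
  [&& inZ n m u, inZ n m v &
  [exists i : 'I_m.+2, exists j : 'I_m.+2,
    [&& (j == i.+1 :> nat),
        [forall k : 'I_m.+2, ((k != i) && (k != j)) ==> (u k == v k)] &
        (coord_eq n m i (u i) (v i + 1)%R && coord_eq n m j (u j) (v j - 1)%R)
     || (coord_eq n m i (u i) (v i - 1)%R && coord_eq n m j (u j) (v j + 1)%R)]]].

Definition dist_le (n m : nat) (u w : V m) (k : nat) : Prop :=
  exists p : seq (V m),
    [/\ all (inZ n m) (u :: p), path (adj n m) u p, last u p = w & size p <= k].

(* prefix sum of the first q coordinates: S v q = sum_{i=0}^{q-1} v_i,
   so that p is a pivot iff n | S v (p+1)  (p = -1 gives the empty sum) *)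
Definition psum (m : nat) (v : V m) (q : nat) : int :=
  (\sum_(i < m.+2 | (i < q)%N) v i)%R.

(* p_l(v) = max{p in Piv(v) : p < m/2}; written with q = p+1 in [0, m+2]:
   p < m/2  <->  2q < m+2 *)
Definition pl (n m : nat) (v : V m) : int :=
  ((\max_(q < m.+3 | (n%:Z %| psum m v q)%Z && (2 * q < m + 2)%N) q)%:Z - 1)%R.

(* p_r(v) = min{p in Piv(v) : p >= m/2};  p >= m/2  <->  m+2 <= 2q *)
Definition pr (n m : nat) (v : V m) : int :=
  ((\big[minn/m.+2]_(q < m.+3 | (n%:Z %| psum m v q)%Z && (m + 2 <= 2 * q)%N) q)%:Z
     - 1)%R.

Definition Ic (n m : nat) (v : V m) : seq nat :=
  [seq i <- iota 0 m.+2 | ((pl n m v < i%:Z) && (i%:Z <= pr n m v))%R].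

(* Main.v *)
Require Import Defs.
From mathcomp Require Import all_boot all_order all_algebra zify ring.
Import Order.TTheory GRing.Theory Num.Theory.

Module MP1.
Local Open Scope ring_scope.

Section Moves.
Variables (n m : nat).
Hypothesis n_gt1 : (1 < n)%N.

Lemma nz_n : (n%:Z != 0)%R.
Proof. by rewrite eqz_nat; case: n n_gt1. Qed.

Definition fixc (k : 'I_m.+2) (x : int) : int :=
  if endcoord m k then (x %% n%:Z)%Z else x.

Definition mv (u : V m) (lo hi : 'I_m.+2) (a : int) : V m :=
  [ffun k => if k == lo then fixc lo (u lo + a)%R
             else if k == hi then fixc hi (u hi - a)%R else u k].

Lemma inZ_in {u} : inZ n m u -> forall k, ~~ endcoord m k -> u k \in [:: (-1)%R; 0%R; 1%R].
Proof.
by case/andP=> /forallP H _ k Hk; move: (H k); rewrite (negbTE Hk).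
Qed.

Lemma inZ_end {u} : inZ n m u -> forall k, endcoord m k -> (0 <= u k)%R && (u k < n%:Z)%R.
Proof. by case/andP=> /forallP H _ k Hk; move: (H k); rewrite Hk. Qed.

Lemma inZ_sum {u} : inZ n m u -> (n%:Z %| \sum_(k < m.+2) u k)%Z.
Proof. by case/andP. Qed.

Lemma inZ_abs {u} : inZ n m u -> forall k, ~~ endcoord m k -> (absz (u k) <= 1)%N.
Proof. clear n_gt1. move=> H k Hk; move: (inZ_in H k Hk); rewrite !inE; lia. Qed.

Lemma fixc_dvd k x : (n%:Z %| fixc k x - x)%Z.
Proof.
rewrite /fixc; case: ifP => _; last by rewrite addrN rpred0.
rewrite {2}(divz_eq x n%:Z) opprD addrCA subrr addr0 rpredN.
by apply: dvdz_mull.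
Qed.

Lemma fixc_in k x : ~~ endcoord m k -> fixc k x = x.
Proof. by rewrite /fixc => /negbTE ->. Qed.

Lemma fixc_range k x : endcoord m k -> (0 <= fixc k x)%R && (fixc k x < n%:Z)%R.
Proof.
rewrite /fixc => ->; rewrite modz_ge0 ?nz_n //=.
have := ltz_mod x nz_n. by [].

Qed.

Lemma mv_lo u lo hi a : mv u lo hi a lo = fixc lo (u lo + a)%R.
Proof. by rewrite ffunE eqxx. Qed.

Lemma mv_hi u lo hi a : lo != hi -> mv u lo hi a hi = fixc hi (u hi - a)%R.
Proof. by rewrite ffunE eq_sym => /negbTE ->; rewrite eqxx. Qed.

Lemma mv_other u lo hi a k : k != lo -> k != hi -> mv u lo hi a k = u k.
Proof. by rewrite ffunE => /negbTE -> /negbTE ->. Qed.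

Lemma sum_delta (Q : pred 'I_m.+2) (u w : V m) lo hi : lo != hi ->
  (forall k, k != lo -> k != hi -> w k = u k) ->
  (\sum_(k | Q k) w k = \sum_(k | Q k) u k + ((if Q lo then w lo - u lo else 0)
       + (if Q hi then w hi - u hi else 0)))%R.
Proof.
move=> Hne Hw.
have -> : (\sum_(k | Q k) w k = \sum_(k | Q k) (u k + (w k - u k)))%R.
  by apply: eq_bigr => k _; rewrite addrC subrK.
rewrite big_split /=; congr (_ + _)%R.
rewrite big_mkcond (bigD1 lo) //= (bigD1 hi) /=; last by rewrite eq_sym.
rewrite addrA big1 ?addr0 // => k /andP [H1 H2].
by rewrite Hw // subrr if_same.
Qed.

Lemma coord_eqI k x y : (n%:Z %| x - y)%Z -> (~~ endcoord m k -> x = y) -> coord_eq n m k x y.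
Proof.
rewrite /coord_eq; case: ifP => E H1 H2; first by rewrite eqz_mod_dvd.
by apply/eqP; apply: H2; apply/negbT.
Qed.

Lemma mv_inZ u (lo hi : 'I_m.+2) a : inZ n m u -> (val hi = (val lo).+1)%N ->
  (~~ endcoord m lo -> (u lo + a)%R \in [:: (-1)%R; 0%R; 1%R]) ->
  (~~ endcoord m hi -> (u hi - a)%R \in [:: (-1)%R; 0%R; 1%R]) ->
  inZ n m (mv u lo hi a).
Proof.
move=> Hu Hlh Hl Hh.
have Hne : lo != hi by apply/eqP => E; move: Hlh; rewrite E; lia.
apply/andP; split.
  apply/forallP => k.
  case: (eqVneq k lo) => [->|Hk1].
    rewrite mv_lo; case: ifP => E; first by apply: fixc_range.
    by rewrite fixc_in ?E //; apply: Hl; rewrite E.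
  case: (eqVneq k hi) => [->|Hk2].
    rewrite mv_hi //; case: ifP => E; first by apply: fixc_range.
    by rewrite fixc_in ?E //; apply: Hh; rewrite E.
  rewrite mv_other //; case: ifP => E; first by apply: inZ_end.
  by apply: inZ_in; rewrite ?E.
rewrite (@sum_delta predT u _ lo hi Hne); last by move=> k; apply: mv_other.
rewrite /= mv_lo mv_hi //.
apply: rpredD; first by apply: inZ_sum.
have -> : ((fixc lo (u lo + a) - u lo) + (fixc hi (u hi - a) - u hi) =
   (fixc lo (u lo + a) - (u lo + a)) + (fixc hi (u hi - a) - (u hi - a)))%R.
  by rewrite !opprD !opprK; ring.
by apply: rpredD; apply: fixc_dvd.
Qed.

Lemma mv_adj u (lo hi : 'I_m.+2) a : inZ n m u -> (val hi = (val lo).+1)%N ->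
  (a = 1 \/ a = -1)%R -> inZ n m (mv u lo hi a) -> adj n m u (mv u lo hi a).
Proof.
move=> Hu Hlh Ha Hu'.
have Hne : lo != hi by apply/eqP => E; move: Hlh; rewrite E; lia.
rewrite /adj Hu Hu' /=; apply/existsP; exists lo; apply/existsP; exists hi.
rewrite Hlh eqxx /=.
apply/andP; split.
  apply/forallP => k; apply/implyP => /andP [H1 H2].
  by rewrite mv_other.
have E1 : coord_eq n m lo (u lo) (mv u lo hi a lo - a)%R.
  apply: coord_eqI; rewrite mv_lo.
    have -> : (u lo - (fixc lo (u lo + a) - a) = - (fixc lo (u lo + a) - (u lo + a)))%R.
      by ring.
    by rewrite rpredN fixc_dvd.
  by move=> H; rewrite fixc_in //; ring.
have E2 : coord_eq n m hi (u hi) (mv u lo hi a hi + a)%R.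
  apply: coord_eqI; rewrite mv_hi //.
    have -> : (u hi - (fixc hi (u hi - a) + a) = - (fixc hi (u hi - a) - (u hi - a)))%R.
      by ring.
    by rewrite rpredN fixc_dvd.
  by move=> H; rewrite fixc_in //; ring.
case: Ha => Ha; subst a.
  by rewrite E1 E2 orbT.
by move: E1 E2; rewrite opprK => -> ->.
Qed.

Lemma sum_mv_in (Q : pred 'I_m.+2) u lo hi a : lo != hi -> ~~ endcoord m lo -> ~~ endcoord m hi ->
  \sum_(k | Q k) mv u lo hi a k = \sum_(k | Q k) u k + ((if Q lo then a else 0) + (if Q hi then - a else 0)).
Proof.
move=> Hne Hl Hh.
rewrite (@sum_delta Q u _ lo hi Hne); last by move=> k; apply: mv_other.
rewrite mv_lo mv_hi // !fixc_in //.
congr (_ + (_ + _)); case: ifP => _ //; ring.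
Qed.

Lemma sum_mv_out (Q : pred 'I_m.+2) u lo hi a : lo != hi -> ~~ Q lo -> ~~ Q hi ->
  \sum_(k | Q k) mv u lo hi a k = \sum_(k | Q k) u k.
Proof.
move=> Hne /negbTE Hl /negbTE Hh.
rewrite (@sum_delta Q u _ lo hi Hne); last by move=> k; apply: mv_other.
by rewrite Hl Hh !addr0.
Qed.

Lemma sum_mv_dvd (Q : pred 'I_m.+2) u lo hi a : lo != hi -> Q lo -> Q hi ->
  (n%:Z %| \sum_(k | Q k) mv u lo hi a k - \sum_(k | Q k) u k)%Z.
Proof.
move=> Hne Hl Hh.
rewrite (@sum_delta Q u _ lo hi Hne); last by move=> k; apply: mv_other.
rewrite Hl Hh mv_lo mv_hi //.
have -> : (\sum_(k | Q k) u k + ((fixc lo (u lo + a) - u lo) + (fixc hi (u hi - a) - u hi)) -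
  \sum_(k | Q k) u k = (fixc lo (u lo + a) - (u lo + a)) + (fixc hi (u hi - a) - (u hi - a)))%R.
  by ring.
by apply: rpredD; apply: fixc_dvd.
Qed.

End Moves.
Arguments inZ_in {n m u} _ k _.
Arguments inZ_end {n m u} _ k _.
Arguments inZ_sum {n m u} _.
Arguments inZ_abs {n m u} _ k _.

End MP1.
Import MP1.

Module MP2.
Local Open Scope ring_scope.

Lemma endcoordE m (k : 'I_m.+2) : endcoord m k = ((k : nat) == 0%N) || ((k : nat) == m.+1).
Proof. by []. Qed.

Lemma sum_two_nat N (f g : 'I_N -> nat) lo hi : lo != hi ->
  (forall k, k != lo -> k != hi -> f k = g k) ->
  (\sum_k f k + (g lo + g hi) = \sum_k g k + (f lo + f hi))%N.
Proof.
move=> Hne H.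
rewrite (bigD1 lo) //= (bigD1 hi) /=; last by rewrite eq_sym.
rewrite [X in (_ = X + _)%N](bigD1 lo) //= [X in (_ = _ + X + _)%N](bigD1 hi) /=; last by rewrite eq_sym.
rewrite (eq_bigr g); last by move=> k /andP [H1 H2]; apply: H.
lia.
Qed.

Section Pot.
Variables (n m L R : nat).
Hypothesis n_gt1 : (1 < n)%N.
Hypothesis HLR : (L < R)%N.
Hypothesis HRm : (R <= m)%N.

Definition wt (k : nat) : nat :=
  if (1 <= k <= L)%N then k else if (R < k <= m)%N then (m.+1 - k)%N else 0%N.

Definition Pm (u : V m) (g : nat) : int := \sum_(k < m.+2 | (L < k <= g)%N) u k.

Definition Phi (u : V m) : nat :=
  (\sum_(k < m.+2) wt k * absz (u k) + \sum_(g < m.+2 | (L < g < R)%N) absz (Pm u g))%N.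

Definition Inv (u : V m) : Prop :=
  [/\ inZ n m u, (n%:Z %| \sum_(k < m.+2 | (k <= L)%N) u k)%Z & Pm u R = 0].

Lemma Pm_L u : Pm u L = 0.
Proof. by rewrite /Pm big_pred0 // => k; lia. Qed.

Lemma Pm_step u g : (L < g)%N -> (g < m.+2)%N -> Pm u g = Pm u g.-1 + u (inord g).
Proof.
move=> H1 H2; rewrite /Pm (bigD1 (inord g)) /=; last by rewrite inordK //; lia.
rewrite addrC; congr (_ + _); apply: eq_bigl => k.
rewrite -val_eqE /= inordK //; lia.
Qed.

Lemma inner_ok (k : 'I_m.+2) : (1 <= k <= m)%N -> ~~ endcoord m k.
Proof. rewrite endcoordE; lia. Qed.

Lemma ord_neq (a b : 'I_m.+2) : (a : nat) <> b -> a != b.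
Proof. by move=> H; apply/eqP => E; apply: H; rewrite E. Qed.

Lemma inv_mem {x : int} : x \in [:: -1; 0; 1] -> x = -1 \/ x = 0 \/ x = 1.
Proof. rewrite !inE => /or3P [] /eqP; auto. Qed.

Lemma mem_inv (x : int) : x = -1 \/ x = 0 \/ x = 1 -> x \in [:: -1; 0; 1].
Proof. by case=> [->|[->|->]]. Qed.

Lemma left_move u (i : 'I_m.+2) : Inv u -> (1 <= i <= L)%N -> u i != 0 ->
  (forall j : 'I_m.+2, (1 <= j < i)%N -> u j = 0) ->
  exists u', [/\ adj n m u u', Inv u' & (Phi u' < Phi u)%N].
Proof.
case=> Hu Hpre Hmid Hi Hui Hj.
set lo : 'I_m.+2 := inord i.-1.
have Hlo : (lo : nat) = i.-1 by rewrite /= inordK //; lia.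
have Hlh : (i : nat) = (lo : nat).+1 by lia.
have Hne : lo != i by apply: ord_neq; lia.
have Hiin : ~~ endcoord m i by apply: inner_ok; lia.
have Ha : u i = 1 \/ u i = -1.
  by move: (inv_mem (inZ_in Hu i Hiin)) Hui; case=> [->|[->|->]]; auto.
set u' := mv n m u lo i (u i).
have Hu' : inZ n m u'.
  apply: mv_inZ => //.
    move=> Hl; rewrite Hj; last by move: Hl; rewrite endcoordE; lia.
    by rewrite add0r; apply: mem_inv; lia.
  by rewrite subrr.
have Hu'i : u' i = 0 by rewrite /u' mv_hi // subrr fixc_in.
have HP : forall g, (g < R)%N -> Pm u' g = Pm u g.
  move=> g Hg; rewrite /Pm sum_mv_out //; apply/negP; lia.
exists u'; split.
- by apply: mv_adj => //; lia.
- split => //.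
    have := @sum_mv_dvd n m (fun k : 'I_m.+2 => (k <= L)%N) u lo i (u i) Hne.
    rewrite Hlo /= => H.
    have {H} H : (n%:Z %| \sum_(k < m.+2 | (k <= L)%N) u' k - \sum_(k < m.+2 | (k <= L)%N) u k)%Z.
      by apply: H; lia.
    by rewrite -(subrK (\sum_(k < m.+2 | (k <= L)%N) u k) (\sum_(k < m.+2 | (k <= L)%N) u' k)); apply: rpredD.
  by rewrite /Pm sum_mv_out //; apply/negP; lia.
- rewrite /Phi.
  have -> : (\sum_(g < m.+2 | (L < g < R)%N) absz (Pm u' g) = \sum_(g < m.+2 | (L < g < R)%N) absz (Pm u g))%N.
    by apply: eq_bigr => g /andP [_ Hg]; rewrite HP.
  have := @sum_two_nat _ (fun k : 'I_m.+2 => wt k * absz (u' k))%N (fun k => wt k * absz (u k))%N lo i Hne.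
  rewrite /= Hu'i muln0 addn0.
  have Hwi : (wt i * absz (u i) = i)%N.
    rewrite /wt; case: ifP; [|lia]; case: Ha => -> _; lia.
  have Hwl : (wt lo * absz (u' lo) <= i.-1)%N.
    rewrite /wt Hlo; case: ifP => H.
      have := inZ_abs Hu' lo (inner_ok lo ltac:(rewrite Hlo; lia)) => H2.
      nia.
    case: ifP => H'; lia.
  rewrite Hwi => H; have {H} := H ltac:(by move=> k H1 H2; rewrite /u' mv_other).
  lia.
Qed.

Lemma right_move u (i : 'I_m.+2) : Inv u -> (R < i <= m)%N -> u i != 0 ->
  (forall j : 'I_m.+2, (i < j <= m)%N -> u j = 0) ->
  exists u', [/\ adj n m u u', Inv u' & (Phi u' < Phi u)%N].
Proof.
case=> Hu Hpre Hmid Hi Hui Hj.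
set hi : 'I_m.+2 := inord i.+1.
have Hhi : (hi : nat) = i.+1 by rewrite /= inordK //; lia.
have Hne : i != hi by apply: ord_neq; lia.
have Hiin : ~~ endcoord m i by apply: inner_ok; lia.
have Ha : u i = 1 \/ u i = -1.
  by move: (inv_mem (inZ_in Hu i Hiin)) Hui; case=> [->|[->|->]]; auto.
set u' := mv n m u i hi (- u i).
have Hu' : inZ n m u'.
  apply: mv_inZ => //.
    by rewrite subrr.
  move=> Hl; rewrite Hj; last by move: Hl; rewrite endcoordE; lia.
  by rewrite opprK add0r; apply: mem_inv; lia.
have Hu'i : u' i = 0 by rewrite /u' mv_lo subrr fixc_in.
have HP : forall g, (g < R)%N -> Pm u' g = Pm u g.
  move=> g Hg; rewrite /Pm sum_mv_out //; apply/negP; lia.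
exists u'; split.
- by apply: mv_adj => //; lia.
- split => //.
    by rewrite sum_mv_out //; apply/negP; lia.
  by rewrite /Pm sum_mv_out //; apply/negP; lia.
- rewrite /Phi.
  have -> : (\sum_(g < m.+2 | (L < g < R)%N) absz (Pm u' g) = \sum_(g < m.+2 | (L < g < R)%N) absz (Pm u g))%N.
    by apply: eq_bigr => g /andP [_ Hg]; rewrite HP.
  have := @sum_two_nat _ (fun k : 'I_m.+2 => wt k * absz (u' k))%N (fun k => wt k * absz (u k))%N i hi Hne.
  rewrite /= Hu'i muln0 add0n.
  have Hwi : (wt i * absz (u i) = m.+1 - i)%N.
    rewrite /wt; case: ifP; [lia|]; case: ifP; [|lia]; case: Ha => -> _ _; lia.
  have Hwl : (wt hi * absz (u' hi) <= m - i)%N.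
    rewrite /wt Hhi; case: ifP => H; first lia.
    case: ifP => H'; last lia.
    have := inZ_abs Hu' hi (inner_ok hi ltac:(rewrite Hhi; lia)) => H2.
    nia.
  rewrite Hwi => H; have {H} := H ltac:(by move=> k H1 H2; rewrite /u' mv_other).
  lia.
Qed.

Lemma mid_move u (g0 : 'I_m.+2) : Inv u -> (L < g0 < R)%N -> Pm u g0 != 0 ->
  (forall g : 'I_m.+2, (L < g < R)%N -> (absz (Pm u g) <= absz (Pm u g0))%N) ->
  exists u', [/\ adj n m u u', Inv u' & (Phi u' < Phi u)%N].
Proof.
case=> Hu Hpre Hmid Hg0 HP0 Hmax.
set hi : 'I_m.+2 := inord g0.+1.
have Hhi : (hi : nat) = g0.+1 by rewrite /= inordK //; lia.
have Hne : g0 != hi by apply: ord_neq; lia.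
have Hlin : ~~ endcoord m g0 by apply: inner_ok; lia.
have Hhin : ~~ endcoord m hi by apply: inner_ok; lia.
set P := Pm u g0.
set a : int := if (0 < P) then -1 else 1.
have Hprev : Pm u g0 = Pm u g0.-1 + u g0.
  by rewrite Pm_step; [rewrite inord_val | lia | lia].
have Hnext : Pm u g0.+1 = Pm u g0 + u hi.
  by rewrite Pm_step /=; [ | lia | lia].
have Hprev' : Pm u g0.-1 = 0 \/ (absz (Pm u g0.-1) <= absz P)%N.
  case: (ltnP L g0.-1) => H.
    right; have := Hmax (inord g0.-1); rewrite inordK; last lia.
    by apply; lia.
  left; have -> : g0.-1 = L by lia.
  by apply: Pm_L.
have Hnext' : Pm u g0.+1 = 0 \/ (absz (Pm u g0.+1) <= absz P)%N.
  case: (ltnP g0.+1 R) => H.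
    right; have := Hmax hi; rewrite Hhi.
    by apply; lia.
  left; have -> : g0.+1 = R by lia.
  done.
have Hug := inv_mem (inZ_in Hu g0 Hlin).
have Huh := inv_mem (inZ_in Hu hi Hhin).
have HPa : (absz (P + a)%R < absz P)%N.
  rewrite /a; case: ifP; move: HP0; rewrite -/P; lia.
set u' := mv n m u g0 hi a.
have Hu' : inZ n m u'.
  apply: mv_inZ => // _; apply: mem_inv; move: Hprev Hnext Hprev' Hnext' Hug Huh HP0;
   rewrite /a -/P; case: ifP; lia.
have HPm : forall g : 'I_m.+2, (L < g < R)%N -> g != g0 -> Pm u' g = Pm u g.
  move=> g Hg Hgg; rewrite /Pm sum_mv_in // Hhi.
  have Hgg' : (g : nat) <> g0 by move=> E; move/eqP: Hgg; apply; apply: val_inj.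
  case: (ltnP g g0) => H.
    rewrite ifF; last lia. rewrite ifF; last lia. by rewrite !addr0.
  rewrite ifT; last lia. rewrite ifT; last lia. by rewrite subrr addr0.
have HPg0 : Pm u' g0 = P + a.
  rewrite /Pm sum_mv_in // Hhi ifT; last lia. by rewrite ifF ?addr0 //; lia.
exists u'; split.
- apply: mv_adj => //.
  by rewrite /a; case: ifP; auto.
- split => //.
    by rewrite sum_mv_out //; apply/negP; lia.
  rewrite /Pm sum_mv_in // Hhi ifT; last lia. rewrite ifT; last lia.
  by rewrite subrr addr0.
- rewrite /Phi.
  have -> : (\sum_(k < m.+2) wt k * absz (u' k) = \sum_(k < m.+2) wt k * absz (u k))%N.
    have := @sum_two_nat _ (fun k : 'I_m.+2 => wt k * absz (u' k))%N (fun k => wt k * absz (u k))%N g0 hi Hne.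
    have -> : wt g0 = 0%N by rewrite /wt; case: ifP; [lia|]; case: ifP; lia.
    have -> : wt hi = 0%N by rewrite /wt Hhi; case: ifP; [lia|]; case: ifP; lia.
    rewrite !mul0n /= !addn0 => H; apply: H.
    by move=> k H1 H2; rewrite /u' mv_other.
  rewrite ltn_add2l.
  rewrite (bigD1 g0) //= [X in (_ < X)%N](bigD1 g0) //= HPg0.
  rewrite (eq_bigr (fun g : 'I_m.+2 => absz (Pm u g))); last first.
    by move=> g /andP [H1 H2]; rewrite HPm.
  by rewrite ltn_add2r.
Qed.

Lemma small_dvd0 (x : int) : 0 <= x -> x < n%:Z -> (n%:Z %| x)%Z -> x = 0.
Proof.
move=> H1 H2 /dvdz_mod0P H.
have E : (x %% n%:Z)%Z = x by apply: modz_small; rewrite H1 H2.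
by rewrite -E H.
Qed.

Lemma zero_case u : Inv u ->
  (forall i : 'I_m.+2, (1 <= i <= L)%N -> u i = 0) ->
  (forall i : 'I_m.+2, (R < i <= m)%N -> u i = 0) ->
  (forall g : 'I_m.+2, (L < g < R)%N -> Pm u g = 0) -> u = zeroV m.
Proof.
case=> Hu Hpre Hmid HA HB HC.
have Hin : forall k : 'I_m.+2, (1 <= k <= m)%N -> u k = 0.
  move=> k Hk; case: (leqP k L) => H1; first by apply: HA; lia.
  case: (leqP k R) => H2; last by apply: HB; lia.
  have E := Pm_step u k H1 (ltn_ord k); rewrite inord_val in E.
  have E1 : Pm u k = 0.
    case: (ltnP k R) => H3; first by apply: HC; lia.
    by have -> : (k : nat) = R by lia.
  have E2 : Pm u k.-1 = 0.
    case: (ltnP L k.-1) => H3.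
      have := HC (inord k.-1); rewrite inordK; last lia.
      by apply; lia.
    have -> : k.-1 = L by lia.
    by apply: Pm_L.
  by move: E; rewrite E1 E2 add0r.
have H0 : u ord0 = 0.
  move: Hpre; rewrite (bigD1 ord0) //= big1 ?addr0.
    by apply: small_dvd0; case/andP: (inZ_end Hu ord0 erefl).
  move=> k /andP [H1 H2]; apply: Hin.
  have : (k : nat) <> 0%N by move=> E; move/eqP: H2; apply; apply: val_inj.
  lia.
have Hm : u ord_max = 0.
  move: (inZ_sum Hu); rewrite (bigD1 ord_max) //= big1 ?addr0.
    by apply: small_dvd0; case/andP: (inZ_end Hu ord_max ltac:(by rewrite /endcoord eqxx orbT)).
  move=> k H2.
  have : (k : nat) <> m.+1 by move=> E; move/eqP: H2; apply; apply: val_inj.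
  case: (eqVneq k ord0) => [-> //|H3] H4.
  have : (k : nat) <> 0%N by move=> E; move/eqP: H3; apply; apply: val_inj.
  move=> H5; apply: Hin; have := ltn_ord k; lia.
apply/ffunP => k; rewrite ffunE.
case: (eqVneq k ord0) => [-> //|H3].
case: (eqVneq k ord_max) => [-> //|H4].
have : (k : nat) <> 0%N by move=> E; move/eqP: H3; apply; apply: val_inj.
have : (k : nat) <> m.+1 by move=> E; move/eqP: H4; apply; apply: val_inj.
move=> H5 H6; apply: Hin; have := ltn_ord k; lia.
Qed.

Lemma step u : Inv u -> u != zeroV m ->
  exists u', [/\ adj n m u u', Inv u' & (Phi u' < Phi u)%N].
Proof.
move=> Hinv Hnz.
case: (boolP [exists i : 'I_m.+2, (1 <= i <= L)%N && (u i != 0)]).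
  case/existsP => i0 Hi0.
  pose p := fun j : nat => (1 <= j <= L)%N && (u (inord j) != 0).
  have exP : exists j, p j by exists (val i0); rewrite /p inord_val.
  case: (ex_minnP exP) => j /andP [Hj1 Hj2] Hmin.
  apply: (@left_move u (inord j)) => //; first by rewrite inordK //; lia.
  move=> j' Hj'; apply/eqP; apply/negP => /negP Hne.
  have := Hmin j'; rewrite /p inord_val Hne andbT.
  rewrite inordK in Hj'; last lia.
  have -> : (1 <= j' <= L)%N by lia.
  move=> /(_ isT); lia.
move/existsPn => HA.
case: (boolP [exists i : 'I_m.+2, (R < i <= m)%N && (u i != 0)]).
  case/existsP => i0 Hi0.
  pose p := fun j : nat => (R < j <= m)%N && (u (inord j) != 0).
  have exP : exists j, p j by exists (val i0); rewrite /p inord_val.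
  have ubP : forall j, p j -> (j <= m)%N by move=> j /andP [H _]; lia.
  case: (ex_maxnP exP ubP) => j /andP [Hj1 Hj2] Hmax.
  apply: (@right_move u (inord j)) => //; first by rewrite inordK //; lia.
  move=> j' Hj'; apply/eqP; apply/negP => /negP Hne.
  have := Hmax j'; rewrite /p inord_val Hne andbT.
  rewrite inordK in Hj'; last lia.
  have -> : (R < j' <= m)%N by lia.
  move=> /(_ isT); lia.
move/existsPn => HB.
case: (boolP [exists g : 'I_m.+2, (L < g < R)%N && (Pm u g != 0)]).
  case/existsP => g1 /andP [Hg1 Hg1'].
  case: (@arg_maxnP _ g1 (fun g : 'I_m.+2 => (L < g < R)%N) (fun g => absz (Pm u g)) Hg1).
  move=> g0 Hg0 Hmax.
  apply: (@mid_move u g0) => //.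
  have := Hmax g1 Hg1; move: Hg1'; lia.
move/existsPn => HC.
exfalso; move/eqP: Hnz; apply; apply: zero_case => //.
- move=> i Hi; move: (HA i); rewrite Hi /= negbK => /eqP //.
- move=> i Hi; move: (HB i); rewrite Hi /= negbK => /eqP //.
- move=> g Hg; move: (HC g); rewrite Hg /= negbK => /eqP //.
Qed.

Lemma descent K : forall u, Inv u -> (Phi u <= K)%N -> dist_le n m u (zeroV m) K.
Proof.
elim: K => [|K IH] u Hinv HK.
  case: (eqVneq u (zeroV m)) => [Hz|Hnz].
    by exists [::]; split => //=; rewrite andbT; case: Hinv.
  by case: (step u Hinv Hnz) => u' [_ _ H]; lia.
case: (eqVneq u (zeroV m)) => [Hz|Hnz].
  by exists [::]; split => //=; rewrite andbT; case: Hinv.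
case: (step u Hinv Hnz) => u' [Hadj Hinv' H].
case: (IH u' Hinv' ltac:(lia)) => p [H1 H2 H3 H4].
exists (u' :: p); split => //=.
- by move: H1 => /= ->; rewrite andbT; case: Hinv.
- by rewrite Hadj H2.
Qed.

End Pot.

End MP2.
Import MP2.

Module MP3.
Local Open Scope ring_scope.

Lemma tri_rev a d : (\sum_(a <= k < a + d) (a + d - k) = \sum_(1 <= i < d.+1) i)%N.
Proof.
elim: d => [|d IH]; first by rewrite addn0 !big_geq.
rewrite addnS big_nat_recl; last by lia.
rewrite (eq_bigr (fun k => a + d - k)%N); last by move=> k _; lia.
rewrite IH [RHS]big_nat_recr //=; lia.
Qed.

Lemma tri_min_step k :
  (\sum_(1 <= t < k.+2) minn t (k.+2 - t) = \sum_(1 <= t < k) minn t (k - t) + k.+1)%N.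
Proof.
rewrite big_ltn //.
have -> : (\sum_(2 <= t < k.+2) minn t (k.+2 - t) = \sum_(1 <= i < k.+1) minn (i + 1) (k.+2 - (i + 1)))%N.
  by rewrite (big_addn 1 k.+2 1) subn1.
rewrite (eq_big_nat _ _ (F2 := fun i => minn i (k - i) + 1)%N); last by move=> i Hi; lia.
rewrite big_split /= sum_nat_const_nat.
case: k => [|k]; first by rewrite !big_geq.
rewrite big_nat_recr //=; lia.
Qed.

Lemma tri_min g : (\sum_(1 <= t < g) minn t (g - t) = g./2 * uphalf g)%N.
Proof.
suff : forall k, (\sum_(1 <= t < k) minn t (k - t) = k./2 * uphalf k)%N /\
                 (\sum_(1 <= t < k.+1) minn t (k.+1 - t) = k.+1./2 * uphalf k.+1)%N.
  by move=> /(_ g) [].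
elim=> [|k [IH1 IH2]]; first by rewrite !big_geq.
split => //.
rewrite tri_min_step IH1 /=.
have H1 := uphalf_half k; have H2 := odd_double_half k.
rewrite -muln2 in H2.
move: H1 H2; set o := nat_of_bool (odd k); set h := k./2; set uh := uphalf k.
move=> H1 H2; nia.
Qed.

Section Bound.
Variables (n m L R : nat).
Hypothesis n_gt1 : (1 < n)%N.
Hypothesis HLR : (L < R)%N.
Hypothesis HRm : (R <= m)%N.

Lemma wsum : (\sum_(k < m.+2) wt m L R k = \sum_(1 <= i < L.+1) i + \sum_(1 <= i < (m - R).+1) i)%N.
Proof.
rewrite -(big_mkord xpredT (wt m L R)).
rewrite (big_cat_nat _ (n := L.+1)) //; last lia.
rewrite (big_cat_nat _ (m := L.+1) (n := R.+1)); [|lia|lia].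
rewrite (big_cat_nat _ (m := R.+1) (n := m.+1)); [|lia|lia].
rewrite (eq_big_nat _ _ (F1 := wt m L R) (F2 := id) (m := 0)); last first.
  by move=> i Hi; rewrite /wt; case: ifP; [|case: ifP]; lia.
rewrite (eq_big_nat _ _ (F1 := wt m L R) (F2 := fun _ => 0%N) (m := L.+1)); last first.
  by move=> i Hi; rewrite /wt; case: ifP; [|case: ifP]; lia.
rewrite (eq_big_nat _ _ (F1 := wt m L R) (F2 := fun k => (R.+1 + (m - R) - k)%N) (m := R.+1)); last first.
  by move=> i Hi; rewrite /wt; case: ifP; [|case: ifP]; lia.
rewrite (eq_big_nat _ _ (F1 := wt m L R) (F2 := fun _ => 0%N) (m := m.+1)); last first.
  by move=> i Hi; rewrite /wt; case: ifP; [|case: ifP]; lia.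
have -> : m.+1 = (R.+1 + (m - R))%N by lia.
rewrite tri_rev !big1_eq big_ltn //=; lia.
Qed.

Lemma Pm_bound1 v : inZ n m v -> forall t, (t <= R - L)%N -> (absz (Pm m L v (L + t)) <= t)%N.
Proof.
move=> Hv; elim=> [|t IH] Ht.
  by rewrite addn0 (@Pm_L n m L R n_gt1 HLR HRm).
rewrite (@Pm_step n m L R n_gt1 HLR HRm); [|lia|lia].
have -> : (L + t.+1).-1 = (L + t)%N by lia.
have := IH ltac:(lia).
have := inZ_abs Hv (inord (L + t.+1)) (@inner_ok n m L R n_gt1 HLR HRm (inord (L + t.+1)) ltac:(rewrite inordK; lia)).
lia.
Qed.

Lemma Pm_bound2 v : Inv n m L R v -> forall t, (t <= R - L)%N -> (absz (Pm m L v (R - t)) <= t)%N.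
Proof.
case=> Hv _ Hmid; elim=> [|t IH] Ht.
  by rewrite subn0 Hmid.
have E := @Pm_step n m L R n_gt1 HLR HRm v (R - t) ltac:(lia) ltac:(lia).
have -> : (R - t.+1)%N = (R - t).-1 by lia.
have := IH ltac:(lia).
have := inZ_abs Hv (inord (R - t)) (@inner_ok n m L R n_gt1 HLR HRm (inord (R - t)) ltac:(rewrite inordK; lia)).
move: E; lia.
Qed.

Lemma mid_bound v : Inv n m L R v ->
  (\sum_(g < m.+2 | (L < g < R)%N) absz (Pm m L v g) <= (R - L)./2 * uphalf (R - L))%N.
Proof.
move=> Hinv.
apply: (leq_trans (n := \sum_(g < m.+2 | (L < g < R)%N) minn (g - L) (R - g))).
  apply: leq_sum => g Hg; rewrite leq_min; apply/andP; split.
    have := Pm_bound1 v (let: And3 h _ _ := Hinv in h) (g - L) ltac:(lia).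
    by have -> : (L + (g - L))%N = g by lia.
  have := Pm_bound2 v Hinv (R - g) ltac:(lia).
  by have -> : (R - (R - g))%N = g by lia.
rewrite -tri_min -(big_mkord (fun g => L < g < R)%N (fun g => minn (g - L) (R - g))).
rewrite big_mkcond /=.
rewrite (big_cat_nat _ (n := L.+1)) //; last lia.
rewrite (big_cat_nat _ (m := L.+1) (n := R)); [|lia|lia].
rewrite (eq_big_nat _ _ (m := 0) (F2 := fun _ => 0%N)); last first.
  by move=> i Hi; case: ifP => //; lia.
rewrite (eq_big_nat _ _ (m := R) (F2 := fun _ => 0%N)); last first.
  by move=> i Hi; case: ifP => //; lia.
rewrite (eq_big_nat _ _ (m := L.+1) (F2 := fun g => minn (g - L) (R - g))); last first.
  by move=> i Hi; case: ifP => //; lia.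
rewrite !big1_eq /= add0n addn0.
have -> : (\sum_(L.+1 <= i < R) minn (i - L) (R - i) = \sum_(1 + L <= i < R) minn (i - L) (R - i))%N by [].
rewrite big_addn.
by apply: eq_leq; apply: eq_big_nat => i Hi; congr minn; lia.
Qed.

Lemma Phi_bound v : Inv n m L R v ->
  (Phi m L R v <= \sum_(1 <= i < L.+1) i + \sum_(1 <= i < (m - R).+1) i + (R - L)./2 * uphalf (R - L))%N.
Proof.
move=> Hinv; rewrite /Phi -wsum; apply: leq_add; last by apply: mid_bound.
apply: leq_sum => k _.
case E: (endcoord m k).
  suff -> : wt m L R k = 0%N by [].
  move: E; rewrite endcoordE /wt; case: ifP; [|case: ifP]; lia.
have := inZ_abs (let: And3 h _ _ := Hinv in h) k (negbT E); nia.
Qed.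

End Bound.

End MP3.
Import MP3.


Theorem lemma5p28 (n m : nat) (v : V m) :
  1 < n -> n <= m -> inZ n m v ->
  all (fun i => 1 <= i <= m) (Ic n m v) ->
  (\sum_(i <- Ic n m v) v (inord i))%R = 0%R ->
  dist_le n m v (zeroV m)
    (\sum_(1 <= i < (absz (pl n m v)).+1) i
     + \sum_(1 <= i < (m - absz (pr n m v)).+1) i
     + (size (Ic n m v))./2 * uphalf (size (Ic n m v))).
Proof.
move=> Hn Hnm Hv Hall Hsum.
set qL := \max_(q < m.+3 | (n%:Z %| psum m v q)%Z && (2 * q < m + 2)%N) q.
have HqL : (n%:Z %| psum m v qL)%Z && (2 * qL < m + 2)%N.
  apply: (big_ind (fun x : nat => (n%:Z %| psum m v x)%Z && (2 * x < m + 2)%N)) => //.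
  - rewrite /psum big_pred0 ?rpred0 //; lia.
  - by move=> x y Hx Hy; case: (leqP x y) => H.
set qR := \big[minn/m.+2]_(q < m.+3 | (n%:Z %| psum m v q)%Z && (m + 2 <= 2 * q)%N) q.
have HqR : [&& (n%:Z %| psum m v qR)%Z, (m + 2 <= 2 * qR)%N & (qR <= m.+2)%N].
  apply: (big_ind (fun x : nat => [&& (n%:Z %| psum m v x)%Z, (m + 2 <= 2 * x)%N & (x <= m.+2)%N])).
  - apply/and3P; split; [|lia|lia].
    rewrite /psum (eq_bigl xpredT); first by apply: inZ_sum.
    by move=> k; rewrite /= ltn_ord.
  - by move=> x y Hx Hy; case: (leqP x y) => H.
  - move=> i /andP [H1 H2]; apply/and3P; split => //; have := ltn_ord i; lia.
case/andP: HqL => HqLd HqLb.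
case/and3P: HqR => HqRd HqRb HqRm.
have HplE : pl n m v = (qL%:Z - 1)%R by [].
have HprE : pr n m v = (qR%:Z - 1)%R by [].
have HqL1 : (1 <= qL)%N.
  case: (posnP qL) => // H0.
  have : 0%N \in Ic n m v.
    rewrite /Ic mem_filter mem_iota HplE HprE H0 /=; lia.
  by move/(allP Hall).
have HqRm1 : (qR <= m.+1)%N.
  case: (leqP qR m.+1) => // H0.
  have : m.+1 \in Ic n m v.
    rewrite /Ic mem_filter mem_iota HplE HprE /=; lia.
  by move/(allP Hall) => /=; lia.
set L := qL.-1.
set R := qR.-1.
have HLR : (L < R)%N by lia.
have HRm : (R <= m)%N by lia.
have HplL : pl n m v = (L%:Z)%R by rewrite HplE; lia.
have HprR : pr n m v = (R%:Z)%R by rewrite HprE; lia.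
have HIc : Ic n m v = [seq i <- iota 0 m.+2 | (L < i <= R)%N].
  by rewrite /Ic; apply: eq_filter => i; rewrite HplL HprR ltz_nat lez_nat.
have Hsize : size (Ic n m v) = (R - L)%N.
  rewrite HIc.
  have -> : m.+2 = (L.+1 + (R - L) + (m.+1 - R))%N by lia.
  rewrite iotaD iotaD !filter_cat size_cat size_cat.
  rewrite (eq_in_filter (a2 := xpred0)); last by move=> x; rewrite mem_iota; lia.
  rewrite (eq_in_filter (a1 := fun i => (L < i <= R)%N) (s := iota (0 + L.+1) (R - L)) (a2 := xpredT)); last first.
    by move=> x; rewrite mem_iota; lia.
  rewrite (eq_in_filter (a1 := fun i => (L < i <= R)%N) (a2 := xpred0)); last first.
    by move=> x; rewrite mem_iota; lia.
  by rewrite !size_filter !count_pred0 count_predT size_iota add0n addn0.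
rewrite Hsize HplL HprR /=.
have Hinv : Inv n m L R v.
  split => //.
    move: HqLd; rewrite /psum.
    have -> : qL = L.+1 by lia.
    by [].
  rewrite /Pm; move: Hsum; rewrite HIc big_filter -/(index_iota 0 m.+2) big_mkord.
  by rewrite (eq_bigr (fun i => v i)) // => i _; rewrite inord_val.
exact: (@descent n m L R Hn HLR HRm _ v Hinv (@Phi_bound n m L R Hn HLR HRm v Hinv)).
Qed.
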